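(* Let $\Lambda,\Gamma$ be finite simplicial graphs and $f\colon V(\Lambda)\to V(\Gamma)$ a surjective map which is full (for all adjacent $u_1,u_2$ in $\Gamma$ and all $v_i\in f^{-1}(u_i)$, $v_1,v_2$ are adjacent in $\Lambda$) and satisfies condition $( * )$ (for all distinct non-adjacent $u\neq u'$ in $\Gamma$ and every $v\in f^{-1}(u)$ there is $v'\in f^{-1}(u')$ not adjacent to $v$). Suppose every fibre $f^{-1}(u)$ is a clique of $\Lambda$. Then the map sending each $u\in V(\Gamma)$ to the product of the elements of $f^{-1}(u)$ in $C(\Lambda)$ extends to an injective group homomorphism $\varphi\colon C(\Gamma)\hookrightarrow C(\Lambda)$, and $\varphi$ is a quasi-isometric embedding with respect to the word metrics given by the vertex generating sets.
   Context: For a finite simplicial graph $\Gamma$, the right-angled Coxeter group is $C(\Gamma)=\langle V(\Gamma)\mid v^2=1\ (v\in V(\Gamma)),\ [u,v]=1 \text{ iff }\{u,v\}\in E(\Gamma)\rangle$. A clique is a set of pairwise adjacent vertices. *)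

(* Defs.v *)
From Stdlib Require Import Relation_Operators.
From mathcomp Require Import all_boot.
Set Implicit Arguments. Unset Strict Implicit. Unset Printing Implicit Defensive.

Section RACG.
Variable T : finType.
Variable e : rel T.
Implicit Types (w : seq T).

(* One elementary move of the presentation
   < V | v^2 = 1, uv = vu for {u,v} in E >:
   delete / insert a square vv, or swap two adjacent letters u v with e u v. *)
Inductive rcox_step : seq T -> seq T -> Prop :=
| rcox_del a b v : rcox_step (a ++ v :: v :: b) (a ++ b)
| rcox_ins a b v : rcox_step (a ++ b) (a ++ v :: v :: b)
| rcox_comm a b u v : e u v -> rcox_step (a ++ u :: v :: b) (a ++ v :: u :: b).

Definition rcox_eq : seq T -> seq T -> Prop := clos_refl_sym_trans _ rcox_step.

Definition rcox_wlen (w : seq T) (n : nat) : Prop :=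
  (exists w', rcox_eq w w' /\ size w' = n) /\
  (forall w', rcox_eq w w' -> n <= size w').

(* n is the word-metric distance d(x, y) = |x^{-1} y|; x^{-1} is rev x
   since generators are involutions. *)
Definition rcox_dist (x y : seq T) (n : nat) : Prop := rcox_wlen (rev x ++ y) n.
End RACG.

Definition simplicial_graph (T : finType) (e : rel T) : Prop :=
  symmetric e /\ irreflexive e.

Definition fibre_word (V W : finType) (f : V -> W) (u : W) : seq V :=
  enum [pred v | f v == u].

Definition phi_word (V W : finType) (f : V -> W) (w : seq W) : seq V :=
  flatten (map (fibre_word f) w).

(* Main.v *)
Require Import Defs.
From mathcomp Require Import all_boot.
From Stdlib Require Import Relation_Operators FunctionalExtensionality.
Set Implicit Arguments. Unset Strict Implicit. Unset Printing Implicit Defensive.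

(* Proof strategy: solve the word problem of right-angled Coxeter groups
   (Tits' criterion) via an action on "projections onto dependent pairs",
   then show that phi maps Tits-reduced words to Tits-reduced words. *)
Section Tits.
Variables (T : finType) (e : rel T).
Hypotheses (esym : symmetric e) (eirr : irreflexive e).

Notation req := (rcox_eq e).

Lemma req_refl s : req s s. Proof. exact: rst_refl. Qed.
Lemma req_sym s s' : req s s' -> req s' s. Proof. exact: rst_sym. Qed.
Lemma req_trans s1 s2 s3 : req s1 s2 -> req s2 s3 -> req s1 s3.
Proof. exact: rst_trans. Qed.
Lemma req_step s s' : rcox_step e s s' -> req s s'. Proof. exact: rst_step. Qed.

Lemma req_ctx p q s s' : req s s' -> req (p ++ s ++ q) (p ++ s' ++ q).
Proof.
elim=> {s s'}.
- move=> s s' [a b v|a b v|a b u v euv].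
  + have -> : p ++ (a ++ [:: v, v & b]) ++ q = (p ++ a) ++ [:: v, v & b ++ q] by rewrite -!catA.
    have -> : p ++ (a ++ b) ++ q = (p ++ a) ++ (b ++ q) by rewrite -!catA.
    apply: req_step; exact: rcox_del.
  + have -> : p ++ (a ++ [:: v, v & b]) ++ q = (p ++ a) ++ [:: v, v & b ++ q] by rewrite -!catA.
    have -> : p ++ (a ++ b) ++ q = (p ++ a) ++ (b ++ q) by rewrite -!catA.
    apply: req_step; exact: rcox_ins.
  + have -> : p ++ (a ++ [:: u, v & b]) ++ q = (p ++ a) ++ [:: u, v & b ++ q] by rewrite -!catA.
    have -> : p ++ (a ++ [:: v, u & b]) ++ q = (p ++ a) ++ [:: v, u & b ++ q] by rewrite -!catA.
    apply: req_step; exact: rcox_comm.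
- move=> s; exact: rst_refl.
- move=> s s' _ H; exact: req_sym.
- move=> s1 s2 s3 _ H1 _ H2; exact: req_trans H1 H2.
Qed.

Lemma req_ctxl p s s' : req s s' -> req (p ++ s) (p ++ s').
Proof. move=> H; have := req_ctx p [::] H; by rewrite !cats0. Qed.
Lemma req_ctxr q s s' : req s s' -> req (s ++ q) (s' ++ q).
Proof. move=> H; exact: (req_ctx [::] q H). Qed.

Lemma req_move p q v x : all (e v) x -> req (p ++ x ++ v :: q) (p ++ v :: x ++ q).
Proof.
elim: x p => [|c x IH] p /=; first by move=> _; exact: req_refl.
move=> /andP [evc ex].
apply: req_trans (_ : req (p ++ c :: v :: x ++ q) _).
  have := IH (rcons p c) ex; by rewrite !cat_rcons.
apply: req_step; apply: rcox_comm; by rewrite esym.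
Qed.

Lemma req_revcancel s : req (rev s ++ s) [::].
Proof.
elim: s => [|a s IH] /=; first exact: req_refl.
rewrite rev_cons cat_rcons.
apply: req_trans IH; apply: req_step; exact: rcox_del.
Qed.

Fixpoint cendr (rs : seq T) (v : T) : bool :=
  if rs is a :: rs' then (a == v) || (e v a && cendr rs' v) else false.
Definition cend s v := cendr (rev s) v.
Fixpoint tredr (rs : seq T) : bool :=
  if rs is a :: rs' then tredr rs' && ~~ cendr rs' a else true.
Definition tred s := tredr (rev s).

Lemma tred_rcons s v : tred (rcons s v) = tred s && ~~ cend s v.
Proof. by rewrite /tred /cend rev_rcons. Qed.
Lemma cend_rcons s a v : cend (rcons s a) v = (a == v) || (e v a && cend s v).
Proof. by rewrite /cend rev_rcons. Qed.
Lemma tred_nil : tred [::]. Proof. by []. Qed.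

Lemma tred_catl s y : tred (s ++ y) -> tred s.
Proof.
elim/last_ind: y => [|y c IH]; first by rewrite cats0.
by rewrite -rcons_cat tred_rcons => /andP [/IH].
Qed.

Lemma cendr_skip z rs v : all (fun a => a != v) z ->
  cendr (z ++ rs) v = all (e v) z && cendr rs v.
Proof.
elim: z => [|a z IH] //= /andP [/negbTE -> /IH ->]; by rewrite andbA.
Qed.

Lemma cendr_extract rs v : cendr rs v ->
  exists p x, rev rs = p ++ v :: x /\ all (e v) x.
Proof.
elim: rs => [|a rs IH] //= /orP [/eqP -> | /andP [eva /IH [p [x [E ex]]]]].
  exists (rev rs), [::]; by rewrite rev_cons cats1.
exists p, (rcons x a); split; first by rewrite rev_cons E rcons_cat.
by rewrite all_rcons eva.
Qed.

Lemma cend_extract s v : cend s v -> exists p x, s = p ++ v :: x /\ all (e v) x.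
Proof. move/cendr_extract; by rewrite revK. Qed.

Lemma cendr_intro y z v : all (e v) y -> cendr (y ++ v :: z) v.
Proof.
elim: y => [|a y IH] /=; first by rewrite eqxx.
move=> /andP [-> /IH ->]; by rewrite orbT.
Qed.

Lemma rev_cat_cons (p x : seq T) v : rev (p ++ v :: x) = rev x ++ v :: rev p.
Proof. by rewrite rev_cat rev_cons cat_rcons. Qed.

Lemma cend_intro p x v : all (e v) x -> cend (p ++ v :: x) v.
Proof. move=> ex; rewrite /cend rev_cat_cons; apply: cendr_intro; by rewrite all_rev. Qed.

Lemma cendr_ins y z c v : e c v -> cendr (y ++ z) c -> cendr (y ++ v :: z) c.
Proof.
move=> ecv; elim: y => [|a y IH] /=.
  by move=> ->; rewrite ecv orbT.
by case/orP => [-> // | /andP [-> /IH ->]]; rewrite orbT.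
Qed.

Lemma cend_ins p x c v : e c v -> cend (p ++ x) c -> cend (p ++ v :: x) c.
Proof. rewrite /cend rev_cat rev_cat_cons; exact: cendr_ins. Qed.

Lemma all_neq v x : all (e v) x -> all (fun a => a != v) x.
Proof.
move=> ex; apply/allP => a /(allP ex) eva; apply/eqP => av; move: eva.
by rewrite av eirr.
Qed.

Lemma tred_del p v x : all (e v) x -> tred (p ++ v :: x) -> tred (p ++ x).
Proof.
elim/last_ind: x => [|x c IH]; first by rewrite cats0 cats1 tred_rcons => _ /andP [].
rewrite all_rcons => /andP [evc ex].
rewrite -[p ++ v :: rcons x c]/(p ++ rcons (v :: x) c) -!rcons_cat !tred_rcons.
move=> /andP [/(IH ex) -> H] /=; apply: contra H; apply: cend_ins; by rewrite esym.
Qed.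


Definition dep a b := (a == b) || ~~ e a b.
Definition flt a b (t : seq T) := [seq c <- t | (c == a) || (c == b)].
Definition proj (t : seq T) : T -> T -> seq T :=
  fun a b => if dep a b then rev (flt a b t) else [::].
Definition Cnd v (P : T -> T -> seq T) :=
  (P v v != [::]) && [forall b, dep v b ==> (head v (P v b) == v)].
Definition alpha v (P : T -> T -> seq T) : T -> T -> seq T :=
  fun a b => if dep a b && ((a == v) || (b == v)) then
    (if Cnd v P then behead (P a b) else v :: P a b) else P a b.

Lemma flt_adj a b v x : dep a b -> (a == v) || (b == v) -> all (e v) x ->
  flt a b x = [::].
Proof.
move=> dab vin; elim: x => [|c x IH] //= /andP [evc /IH ->].
case: ifP => // /orP [] /eqP ca; subst c.
- case/orP: vin => /eqP av; first by move: evc; rewrite av eirr.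
  subst b; move: dab; rewrite /dep esym evc orbF => /eqP av; by move: evc; rewrite av eirr.
- case/orP: vin => /eqP av; last by move: evc; rewrite av eirr.
  subst a; move: dab; rewrite /dep evc orbF => /eqP av; by move: evc; rewrite av eirr.
Qed.

Lemma Cproj t v : Cnd v (proj t) = cend t v.
Proof.
elim/last_ind: t => [|t a IH].
  by rewrite /Cnd /proj /dep eqxx.
rewrite cend_rcons.
have Pr : forall x y, proj (rcons t a) x y =
   if dep x y then (if (a == x) || (a == y) then a :: proj t x y else proj t x y) else [::].
  by move=> x y; rewrite /proj /flt filter_rcons; case: (dep x y) => //; case: ifP => // _; rewrite rev_rcons.
case: (eqVneq a v) => [av|anv]; rewrite ?orTb ?orFb.
  subst a; apply/andP; split.
    by rewrite Pr /dep !eqxx.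
  apply/forallP => b; apply/implyP => db; by rewrite Pr db eqxx.
case eva: (e v a); rewrite ?andTb ?andFb.
  have E : forall b, proj (rcons t a) v b = proj t v b.
    move=> b; rewrite Pr; case db: (dep v b); last by rewrite /proj db.
    rewrite (negbTE anv) /=; case: (eqVneq a b) => // ab.
    by subst b; move: db; rewrite /dep eva orbF eq_sym (negbTE anv).
  rewrite -IH /Cnd E; congr (_ && _); apply: eq_forallb => b; by rewrite E.
apply/negbTE/negP => /andP [_ /forallP /(_ a)].
have dva : dep v a by rewrite /dep eva orbT.
by rewrite dva Pr dva eqxx orbT /= (negbTE anv).
Qed.

Lemma alpha_app t v : ~~ cend t v -> alpha v (proj t) = proj (rcons t v).
Proof.
rewrite -Cproj => /negbTE C0.
apply: functional_extensionality => a; apply: functional_extensionality => b.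
rewrite /alpha C0 /proj /flt filter_rcons.
case: (dep a b) => //=.
by case: ifP => vin; rewrite ![v == _]eq_sym vin // rev_rcons.
Qed.

Lemma alpha_del p x v : all (e v) x -> alpha v (proj (p ++ v :: x)) = proj (p ++ x).
Proof.
move=> ex; have C1 : Cnd v (proj (p ++ v :: x)) by rewrite Cproj cend_intro.
apply: functional_extensionality => a; apply: functional_extensionality => b.
rewrite /alpha C1 /proj.
case dab: (dep a b) => //=.
rewrite /flt !filter_cat /=.
case: ifP => vin.
  have := flt_adj dab vin ex; rewrite /flt => ->.
  by rewrite ![v == _]eq_sym vin cats0 rev_cat.
by rewrite ![v == _]eq_sym vin.
Qed.

Lemma proj_swap p q u w : e u w -> proj (p ++ u :: w :: q) = proj (p ++ w :: u :: q).
Proof.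
move=> euw.
have uw : u != w by apply/eqP => E; move: euw; rewrite E eirr.
apply: functional_extensionality => a; apply: functional_extensionality => b.
rewrite /proj; case dab: (dep a b) => //.
rewrite /flt !filter_cat /=.
case pu: ((u == a) || (u == b)); case pw: ((w == a) || (w == b)) => //.
exfalso; move: dab; rewrite /dep.
case/orP: pu => /eqP ua; case/orP: pw => /eqP wa; subst.
- by rewrite eqxx in uw.
- by rewrite (negbTE uw) euw.
- by rewrite eq_sym (negbTE uw) esym euw.
- by rewrite eqxx in uw.
Qed.

Lemma proj_commute p x v : all (e v) x -> proj (p ++ x ++ [:: v]) = proj (p ++ v :: x).
Proof.
elim: x p => [|c x IH] p //= /andP [evc ex].
have := IH (rcons p c) ex; rewrite !cat_rcons => ->.
apply: proj_swap; by rewrite esym.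
Qed.

Definition good P := exists t, tred t /\ P = proj t.

Lemma good_alpha v P : good P -> good (alpha v P).
Proof.
move=> [t [tt ->]]; case: (boolP (cend t v)) => ct.
  have [p [x [E ex]]] := cend_extract ct; subst t.
  exists (p ++ x); split; last exact: alpha_del.
  exact: tred_del tt.
exists (rcons t v); split; last exact: alpha_app.
by rewrite tred_rcons tt.
Qed.

Lemma alpha_inv v P : good P -> alpha v (alpha v P) = P.
Proof.
move=> [t [tt ->]]; case: (boolP (cend t v)) => ct.
  have [p [x [E ex]]] := cend_extract ct; subst t.
  rewrite alpha_del //.
  have nc : ~~ cend (p ++ x) v.
    apply/negP; rewrite /cend rev_cat cendr_skip; last by rewrite all_rev all_neq.
    move=> /andP [_ cp].
    move: tt; rewrite -cat_rcons => /tred_catl; rewrite tred_rcons => /andP [_].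
    by rewrite /cend cp.
  by rewrite alpha_app // -cats1 -catA proj_commute.
rewrite alpha_app // -cats1.
have := @alpha_del t [::] v isT; by rewrite cats0.
Qed.

Lemma alpha_mixed t u w : e u w -> cend t u -> ~~ cend t w ->
  alpha u (alpha w (proj t)) = alpha w (alpha u (proj t)).
Proof.
move=> euw cu cw.
have [p [x [E ex]]] := cend_extract cu; subst t.
rewrite (alpha_app cw) rcons_cat /= alpha_del; last by rewrite all_rcons euw.
rewrite alpha_del // alpha_app ?rcons_cat //.
apply: contra cw; apply: cend_ins; by rewrite esym.
Qed.

Lemma both_dec rs u w : u != w -> cendr rs u -> cendr rs w ->
  exists p y z,
   (rev rs = p ++ w :: y ++ u :: z /\ all (e w) (y ++ u :: z) /\ all (e u) z) \/
   (rev rs = p ++ u :: y ++ w :: z /\ all (e u) (y ++ w :: z) /\ all (e w) z).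
Proof.
move=> uw; elim: rs => [|a rs IH] //=.
case: (eqVneq a u) => [->|anu] /=.
  rewrite (negbTE uw) /= => _ /andP [ewu /cendr_extract [p [y [E ey]]]].
  exists p, y, [::]; left; split; first by rewrite rev_cons E rcons_cat /= cats1.
  by rewrite all_cat ey /= ewu.
case: (eqVneq a w) => [->|anw] /=.
  move=> /andP [euw /cendr_extract [p [y [E ey]]]] _.
  exists p, y, [::]; right; split; first by rewrite rev_cons E rcons_cat /= cats1.
  by rewrite all_cat ey /= euw.
move=> /andP [eua cu] /andP [ewa cw].
have [p [y [z [[E [h1 h2]] | [E [h1 h2]]]]]] := IH cu cw.
  exists p, y, (rcons z a); left; split; first by rewrite rev_cons E !(rcons_cat, rcons_cons).
  move: h1; rewrite !all_cat /= !all_rcons => /andP [-> /andP [-> ->]].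
  by rewrite ewa eua h2.
exists p, y, (rcons z a); right; split; first by rewrite rev_cons E !(rcons_cat, rcons_cons).
move: h1; rewrite !all_cat /= !all_rcons => /andP [-> /andP [-> ->]].
by rewrite ewa eua h2.
Qed.

Lemma both_case p y z u w : all (e w) (y ++ u :: z) -> all (e u) z ->
  alpha u (alpha w (proj (p ++ w :: y ++ u :: z))) =
  alpha w (alpha u (proj (p ++ w :: y ++ u :: z))).
Proof.
move=> h1 h2.
rewrite alpha_del // catA alpha_del //.
have -> : p ++ w :: y ++ u :: z = (p ++ w :: y) ++ u :: z by rewrite -catA.
rewrite (alpha_del (p ++ w :: y) h2) -!catA /= alpha_del //.
by move: h1; rewrite !all_cat /= => /andP [-> /andP [_ ->]].
Qed.

Lemma alpha_comm u w P : good P -> e u w -> alpha u (alpha w P) = alpha w (alpha u P).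
Proof.
move=> [t [tt ->]] euw.
have uw : u != w by apply/eqP => E; move: euw; rewrite E eirr.
case: (boolP (cend t u)) => cu; case: (boolP (cend t w)) => cw.
- have [p [y [z [[E [h1 h2]] | [E [h1 h2]]]]]] := both_dec uw cu cw;
    rewrite revK in E; subst t; first exact: both_case.
  by rewrite both_case.
- exact: alpha_mixed.
- by rewrite (alpha_mixed (w := u)) // esym.
- rewrite !alpha_app //.
  + by rewrite -!cats1 -!catA /= proj_swap // esym.
  + by rewrite cend_rcons (negbTE uw) (negbTE cw) andbF.
  + by rewrite cend_rcons [w == u]eq_sym (negbTE uw) (negbTE cu) andbF.
Qed.


Definition Sig (s : seq T) := foldl (fun P v => alpha v P) (proj [::]) s.

Lemma good_fold s P : good P -> good (foldl (fun P v => alpha v P) P s).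
Proof. elim: s P => [|v s IH] P gP //=; apply: IH; exact: good_alpha. Qed.

Lemma good0 : good (proj [::]). Proof. by exists [::]. Qed.

Lemma Sig_step s s' : rcox_step e s s' -> Sig s = Sig s'.
Proof.
have gS : forall a, good (Sig a) by move=> a; apply: good_fold; exact: good0.
case=> [a b v|a b v|a b u v euv]; rewrite /Sig !foldl_cat /= -/(Sig a).
- by rewrite alpha_inv ?gS.
- by rewrite alpha_inv ?gS.
- by rewrite (alpha_comm (gS a) euv).
Qed.

Lemma Sig_eq s s' : req s s' -> Sig s = Sig s'.
Proof.
elim=> //.
- move=> x y; exact: Sig_step.
- by move=> x y z _ -> _ ->.
Qed.

Lemma Sig_tred s : tred s -> Sig s = proj s.
Proof.
elim/last_ind: s => [|s v IH] //.
rewrite tred_rcons => /andP [ts cs].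
by rewrite /Sig foldl_rcons -/(Sig s) IH // alpha_app.
Qed.

Definition Nm (P : T -> T -> seq T) := \sum_(a : T) size (P a a).

Lemma Nm_alpha v P : Nm (alpha v P) <= (Nm P).+1.
Proof.
rewrite /Nm (bigD1 v) //= [X in _ <= X.+1](bigD1 v) //=.
rewrite -addSn; apply: leq_add.
  rewrite /alpha /dep !eqxx /=; case: (Cnd v P) => /=; last by [].
  rewrite size_behead; apply: leq_trans (leq_pred _) _; exact: leqnSn.
apply: eq_leq; apply: eq_bigr => a av.
by rewrite /alpha orbb (negbTE av) andbF.
Qed.

Lemma Nm_fold s P : Nm (foldl (fun P v => alpha v P) P s) <= Nm P + size s.
Proof.
elim: s P => [|v s IH] P /=; first by rewrite addn0.
apply: leq_trans (IH _) _; rewrite addnS -addSn leq_add2r; exact: Nm_alpha.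
Qed.

Lemma Nm_proj t : Nm (proj t) = size t.
Proof.
rewrite /Nm; elim: t => [|c t IH] /=.
  by rewrite big1 // => a _; rewrite /proj /dep eqxx.
have E : forall a, size (proj (c :: t) a a) = (c == a) + size (proj t a a).
  move=> a; rewrite /proj /dep eqxx /= /flt /= orbb.
  by case: (c == a); rewrite //= rev_cons size_rcons.
rewrite (eq_bigr _ (fun a _ => E a)) big_split /= IH.
rewrite -add1n; congr (_ + _); rewrite (bigD1 c) //= eqxx big1 // => a; by rewrite eq_sym => /negbTE ->.
Qed.

Theorem tits s s' : tred s -> req s s' -> size s <= size s'.
Proof.
move=> ts H; rewrite -Nm_proj -Sig_tred // (Sig_eq H).
have := Nm_fold s' (proj [::]); by rewrite Nm_proj.
Qed.

Lemma untred_short s : ~~ tred s -> exists s', req s s' /\ size s' < size s.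
Proof.
elim/last_ind: s => [|s v IH] //.
rewrite tred_rcons negb_and negbK => /orP [/IH [s' [H hs]] | cs].
  exists (rcons s' v); split; last by rewrite !size_rcons.
  rewrite -!cats1; exact: req_ctxr.
have [p [x [E ex]]] := cend_extract cs; subst s.
exists (p ++ x); split.
  apply: req_trans (_ : req (p ++ [:: v, v & x]) _).
    have := req_move (rcons p v) [::] ex; rewrite !cat_rcons cats0 => H.
    by rewrite -cats1 -catA.
  apply: req_step; exact: rcox_del.
by rewrite size_rcons !size_cat /= addnS ltnS leqnSn.
Qed.

Lemma reduce_ex s : exists r, tred r /\ req s r.
Proof.
move: {2}(size s) (leqnn (size s)) => n; elim: n s => [|n IH] s hs.
  case: s hs => [_|//]; exists [::]; split => //; exact: req_refl.
case: (boolP (tred s)) => ts; first by exists s; split => //; exact: req_refl.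
have [s' [H hs']] := untred_short ts.
have hs2 : size s' <= n by rewrite -ltnS; exact: leq_trans hs' hs.
have [r [tr H']] := IH s' hs2.
exists r; split => //; exact: req_trans H H'.
Qed.


Definition clq (x : seq T) := {in x &, forall a b, a != b -> e a b}.

Lemma clq_cons c x : clq (c :: x) -> clq x.
Proof. move=> H a b ha hb; apply: H; by rewrite inE ?ha ?hb orbT. Qed.

Lemma clq_all c x : uniq (c :: x) -> clq (c :: x) -> all (e c) x.
Proof.
move=> /andP [cx _] H; apply/allP => a ha; apply: H; rewrite ?inE ?eqxx ?ha ?orbT //.
by apply: contra cx => /eqP ->.
Qed.

Lemma req_FF p q x : uniq x -> clq x -> req (p ++ x ++ x ++ q) (p ++ q).
Proof.
elim: x p q => [|c x IH] p q; first by move=> _ _; exact: req_refl.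
move=> ux cx; have ex := clq_all ux cx.
move: ux => /andP [_ ux]; have cx' := clq_cons cx.
apply: req_trans (_ : req (p ++ [:: c, c & x ++ x ++ q]) _).
  have := req_move (rcons p c) (x ++ q) ex; by rewrite !cat_rcons.
apply: req_trans (_ : req (p ++ x ++ x ++ q) _); last exact: IH.
apply: req_step; exact: rcox_del.
Qed.

Lemma req_revF x : uniq x -> clq x -> req (rev x) x.
Proof.
elim: x => [|c x IH]; first by move=> _ _; exact: req_refl.
move=> ux cx; have ex := clq_all ux cx.
move: ux => /andP [_ ux]; have cx' := clq_cons cx.
rewrite rev_cons -cats1.
apply: req_trans (req_ctxr [:: c] (IH ux cx')) _.
have := req_move [::] [::] ex; by rewrite /= cats0.
Qed.

Lemma req_blockswap p q (X Y : seq T) : (forall a b, a \in X -> b \in Y -> e a b) ->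
  req (p ++ X ++ Y ++ q) (p ++ Y ++ X ++ q).
Proof.
elim: X p => [|a X IH] p H /=; first exact: req_refl.
apply: req_trans (_ : req (p ++ a :: Y ++ X ++ q) _).
  have := IH (rcons p a) (fun x y (hx : x \in X) hy => H x y (mem_behead (s := a :: X) hx) hy).
  by rewrite !cat_rcons.
apply: req_sym; apply: req_move; apply/allP => b hb; apply: H => //.
by rewrite inE eqxx.
Qed.

Lemma tred_app_clique s y : tred s -> uniq y -> clq y ->
  (forall v, v \in y -> ~~ cend s v) -> tred (s ++ y).
Proof.
elim/last_ind: y => [|y b IH]; first by rewrite cats0.
move=> ts; rewrite rcons_uniq => /andP [nb uy] cy H.
have cy' : clq y by move=> a c ha hc; apply: cy; rewrite mem_rcons inE ?ha ?hc orbT.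
rewrite -rcons_cat tred_rcons IH //; last by move=> v hv; apply: H; rewrite mem_rcons inE hv orbT.
rewrite /cend rev_cat cendr_skip.
  by rewrite -/(cend s b) (negbTE (H b _)) ?andbF // mem_rcons inE eqxx.
rewrite all_rev; apply/allP => a ha; by apply: contra nb => /eqP <-.
Qed.

End Tits.

Section Main.
Variables (V W : finType) (eL : rel V) (eG : rel W) (f : V -> W).
Hypotheses (symL : symmetric eL) (irrL : irreflexive eL).
Hypotheses (symG : symmetric eG) (irrG : irreflexive eG).
Hypothesis surj : forall u : W, exists v : V, f v = u.
Hypothesis full : forall u1 u2 : W, eG u1 u2 ->
     forall v1 v2 : V, f v1 = u1 -> f v2 = u2 -> eL v1 v2.
Hypothesis star : forall u u' : W, u != u' -> ~~ eG u u' ->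
     forall v : V, f v = u -> exists v' : V, f v' = u' /\ ~~ eL v v'.
Hypothesis clique : forall (u : W) (v1 v2 : V), f v1 = u -> f v2 = u -> v1 != v2 -> eL v1 v2.

Notation F := (fibre_word f).
Notation phi := (phi_word f).

Lemma mem_F v u : (v \in F u) = (f v == u).
Proof. by rewrite /fibre_word mem_enum inE. Qed.

Lemma F_uniq u : uniq (F u). Proof. exact: enum_uniq. Qed.

Lemma F_clq u : clq eL (F u).
Proof. move=> a b ha hb; apply: (clique (u := u)); apply/eqP; by rewrite -mem_F. Qed.

Lemma F_pos u : 0 < size (F u).
Proof.
have [v hv] := surj u; rewrite lt0n size_eq0; apply/eqP => E.
have : v \in F u by rewrite mem_F hv.
by rewrite E.
Qed.

Lemma F_le u : size (F u) <= #|V|.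
Proof. by rewrite /fibre_word -cardE max_card. Qed.

Lemma phi_cat a b : phi (a ++ b) = phi a ++ phi b.
Proof. by rewrite /phi_word map_cat flatten_cat. Qed.

Lemma phi_rcons a u : phi (rcons a u) = phi a ++ F u.
Proof. by rewrite -cats1 phi_cat /phi_word /= cats0. Qed.

Lemma phi_step w1 w2 : rcox_step eG w1 w2 -> rcox_eq eL (phi w1) (phi w2).
Proof.
case=> [a b v|a b v|a b u v euv]; rewrite !phi_cat /phi_word /= -/(phi_word f b).
- exact: (req_FF symL _ _ (@F_uniq v) (@F_clq v)).
- apply: req_sym; exact: (req_FF symL _ _ (@F_uniq v) (@F_clq v)).
- apply: (req_blockswap symL) => x y hx hy; apply: (full euv); apply/eqP; by rewrite -mem_F.
Qed.

Lemma phi_eq w1 w2 : rcox_eq eG w1 w2 -> rcox_eq eL (phi w1) (phi w2).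
Proof.
elim=> {w1 w2}.
- move=> x y; exact: phi_step.
- move=> x; exact: req_refl.
- move=> x y _ H; exact: req_sym.
- move=> x y z _ H1 _ H2; exact: req_trans H1 H2.
Qed.

Lemma revphi x : rcox_eq eL (rev (phi x)) (phi (rev x)).
Proof.
elim: x => [|a x IH]; first exact: req_refl.
rewrite rev_cons phi_rcons /phi_word /= -/(phi_word f x) rev_cat.
apply: req_trans (req_ctxr _ IH) _.
apply: req_ctxl; exact: (req_revF symL (@F_uniq a) (@F_clq a)).
Qed.

Lemma cend_phi r v : cend eL (phi r) v -> cend eG r (f v).
Proof.
elim/last_ind: r => [|r a IH]; first by [].
rewrite phi_rcons cend_rcons.
case: (eqVneq a (f v)) => [//|anv] /=.
rewrite /cend rev_cat cendr_skip; last first.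
  rewrite all_rev; apply/allP => x; rewrite mem_F => /eqP hx.
  by apply/eqP => xv; move: anv; rewrite -hx xv eqxx.
move=> /andP [hall /IH hc]; apply/andP; split => //.
apply/negPn/negP => ne.
have fva : f v != a by rewrite eq_sym.
have [v' [hv' nv]] := star fva ne erefl.
move: hall; rewrite all_rev => /allP /(_ v'); rewrite mem_F hv' eqxx => /(_ isT) h.
by rewrite h in nv.
Qed.

Lemma tred_phi r : tred eG r -> tred eL (phi r).
Proof.
elim/last_ind: r => [|r u IH] //.
rewrite tred_rcons phi_rcons => /andP [/IH tr cu].
apply: tred_app_clique => //; [exact: F_uniq | exact: F_clq |].
move=> v; rewrite mem_F => /eqP hv; apply: contra cu => /cend_phi; by rewrite hv.
Qed.

Lemma size_phi_ge r : size r <= size (phi r).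
Proof.
elim: r => [|u r IH] //=; rewrite /phi_word /= -/(phi_word f r) size_cat.
by rewrite -add1n leq_add // F_pos.
Qed.

Lemma size_phi_le r : size (phi r) <= #|V| * size r.
Proof.
elim: r => [|u r IH] /=; first by rewrite muln0.
rewrite /phi_word /= -/(phi_word f r) size_cat mulnS leq_add //; exact: F_le.
Qed.



Lemma chain x y r : rcox_eq eG (rev x ++ y) r ->
  rcox_eq eL (rev (phi x) ++ phi y) (phi r).
Proof.
move=> hr; apply: req_trans (req_ctxr _ (revphi x)) _.
rewrite -phi_cat; exact: phi_eq.
Qed.

Lemma main_all :
  (forall w1 w2 : seq W, rcox_eq eG w1 w2 -> rcox_eq eL (phi w1) (phi w2)) /\
  (forall w1 w2 : seq W, rcox_eq eL (phi w1) (phi w2) -> rcox_eq eG w1 w2) /\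
  (exists K C : nat, 0 < K /\
     forall (x y : seq W) (dG dL : nat),
       rcox_dist eG x y dG -> rcox_dist eL (phi x) (phi y) dL ->
       dG <= K * dL + C /\ dL <= K * dG + C).
Proof.
split; first exact: phi_eq.
split.
  move=> w1 w2 H.
  have [r [tr hr]] := reduce_ex symG (rev w1 ++ w2).
  have E : rcox_eq eL (phi r) [::].
    apply: req_trans (req_sym (chain hr)) _.
    apply: req_trans (req_ctxl _ (req_sym H)) _.
    exact: req_revcancel.
  have := tits symL irrL (tred_phi tr) E.
  have := size_phi_ge r; move=> h1 h2.
  have r0 : r = [::] by case: r h1 h2 {tr hr E} => //= a r; case: (phi _).
  subst r.
  have := req_ctxl w1 (req_sym hr); rewrite cats0 catA => h3.
  apply: req_trans h3 _.
  have := req_ctxr w2 (req_revcancel eG (rev w1)); by rewrite revK.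
exists #|V|.+1, 0; split => //.
move=> x y dG dL [[w' [hw' sw']] hG] [[w'' [hw'' sw'']] hL].
have [r [tr hr]] := reduce_ex symG (rev x ++ y).
have eG1 : dG = size r.
  apply/eqP; rewrite eqn_leq (hG r hr) /= -sw'.
  exact: (tits symG irrG tr (req_trans (req_sym hr) hw')).
have eL1 : dL = size (phi r).
  apply/eqP; rewrite eqn_leq (hL _ (chain hr)) /= -sw''.
  exact: (tits symL irrL (tred_phi tr) (req_trans (req_sym (chain hr)) hw'')).
rewrite eG1 eL1 !addn0; split.
  apply: leq_trans (size_phi_ge r) _; exact: leq_pmull.
apply: leq_trans (size_phi_le r) _; by rewrite leq_mul2r leqnSn orbT.
Qed.

End Main.

Unset Implicit Arguments.
Theorem proposition6p2 (V W : finType) (eL : rel V) (eG : rel W) (f : V -> W) :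
  simplicial_graph eL -> simplicial_graph eG ->
  (forall u : W, exists v : V, f v = u) ->
  (* full *)
  (forall u1 u2 : W, eG u1 u2 ->
     forall v1 v2 : V, f v1 = u1 -> f v2 = u2 -> eL v1 v2) ->
  (* condition ( * ) *)
  (forall u u' : W, u != u' -> ~~ eG u u' ->
     forall v : V, f v = u -> exists v' : V, f v' = u' /\ ~~ eL v v') ->
  (* fibres are cliques *)
  (forall (u : W) (v1 v2 : V), f v1 = u -> f v2 = u -> v1 != v2 -> eL v1 v2) ->
  (* phi is a well-defined homomorphism C(Gamma) -> C(Lambda) *)
  (forall w1 w2 : seq W, rcox_eq eG w1 w2 -> rcox_eq eL (phi_word f w1) (phi_word f w2)) /\
  (* phi is injective *)
  (forall w1 w2 : seq W, rcox_eq eL (phi_word f w1) (phi_word f w2) -> rcox_eq eG w1 w2) /\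
  (* phi is a quasi-isometric embedding for the word metrics *)
  (exists K C : nat, 0 < K /\
     forall (x y : seq W) (dG dL : nat),
       rcox_dist eG x y dG -> rcox_dist eL (phi_word f x) (phi_word f y) dL ->
       dG <= K * dL + C /\ dL <= K * dG + C).
Proof.
move=> [symL irrL] [symG irrG] surj full star clique.
exact: (main_all symL irrL symG irrG surj full star clique).
Qed.
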